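(* For every integer $n\ge 0$, \[ (-1)^n d_{n,q}=\frac{1}{n!}\sum_{m=0}^{n}2^{2n-m}B_{m,q}S_1(n,m). \]
   Context: Let $p$ be a fixed odd prime, $\mathbb{C}_p$ the completion of the algebraic closure of $\mathbb{Q}_p$, with $|p|_p=1/p$. Let $q\in\mathbb{C}_p$ with $|1-q|_p<p^{-1/(p-1)}$, and $\log$ denotes the $p$-adic logarithm. The $q$-Bernoulli numbers $B_{n,q}$ are defined by \[ \frac{(q-1)+\frac{q-1}{\log q}t}{qe^t-1}=\sum_{n=0}^\infty B_{n,q}\frac{t^n}{n!}. \] The numbers $d_{n,q}$ ($q$-analogues of the Catalan–Daehee numbers) are defined by \[ \frac{q-1+\frac{q-1}{\log q}\cdot\frac12\log(1-4t)}{q\sqrt{1-4t}-1}=\sum_{n=0}^{\infty}d_{n,q}t^n, \] for $t\in\mathbb{C}_p$ with $|t|_p<p^{-1/(p-1)}$. $S_1(n,m)$ are the Stirling numbers of the first kind, defined by $(x)_n=\sum_{l=0}^n S_1(n,l)x^l$, where $(x)_0=1$ and $(x)_n=x(x-1)\cdots(x-n+1)$ for $n\ge1$. *)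

(* Defs.v *)
From HB Require Import structures.
From mathcomp Require Import all_boot all_order all_algebra.
Set Implicit Arguments. Unset Strict Implicit. Unset Printing Implicit Defensive.
Import Order.TTheory GRing.Theory Num.Theory.
Local Open Scope ring_scope.

(* Formal power series over a field K are represented by their coefficient
   sequences  nat -> K  (coefficient of t^n). *)

Definition smul (K : fieldType) (a b : nat -> K) (n : nat) : K :=
  \sum_(i < n.+1) a i * b (n - i)%N.

Definition exp_ser (K : fieldType) (k : nat) : K := (k`!%:R)^-1.

Definition gbinom (K : fieldType) (a : K) (k : nat) : K :=
  (\prod_(i < k) (a - i%:R)) / k`!%:R.

(* sqrt(1-4t) = (1-4t)^(1/2) = sum_k binom(1/2,k) (-4)^k t^k *)
Definition sqrt1m4_ser (K : fieldType) (k : nat) : K :=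
  gbinom (2^-1 : K) k * (-4) ^+ k.

Definition log1m4_ser (K : fieldType) (k : nat) : K :=
  if k == 0%N then 0 else - ((4 ^+ k) / k%:R).

Definition S1 (n l : nat) : int :=
  (\prod_(i < n) ('X - (i%:Z)%:P) : {poly int})`_l.

(* B is the sequence of q-Bernoulli numbers: its exponential generating
   function sum B_n t^n/n! satisfies
   (q e^t - 1) * sum B_n t^n/n! = (q-1) + ((q-1)/log q) t,
   where lq plays the role of log q. *)
Definition is_qBernoulli (K : fieldType) (q lq : K) (B : nat -> K) : Prop :=
  forall n,
    smul (fun k => q * exp_ser K k - (k == 0%N)%:R) (fun k => B k / k`!%:R) n
    = (if n == 0%N then q - 1 else if n == 1%N then (q - 1) / lq else 0).

(* d is the sequence of q-Catalan-Daehee numbers: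
   (q sqrt(1-4t) - 1) * sum d_n t^n = (q-1) + ((q-1)/log q) (1/2) log(1-4t). *)
Definition is_qCatalanDaehee (K : fieldType) (q lq : K) (d : nat -> K) : Prop :=
  forall n,
    smul (fun k => q * sqrt1m4_ser K k - (k == 0%N)%:R) d n
    = (if n == 0%N then q - 1 else 0) + (q - 1) / lq * 2^-1 * log1m4_ser K n.

(* Main.v *)
Require Import Defs.
From HB Require Import structures.
From mathcomp Require Import all_boot all_order all_algebra.
From mathcomp Require Import ring zify.
Set Implicit Arguments. Unset Strict Implicit. Unset Printing Implicit Defensive.
Import Order.TTheory GRing.Theory Num.Theory.
Local Open Scope ring_scope.



Lemma S1_0k k : S1 0 k = (k == 0)%:R.
Proof. by rewrite /S1 big_ord0 coef1. Qed.

Lemma S1_S0 i : S1 i.+1 0 = 0.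
Proof. by rewrite /S1 big_ord_recl coef0M /= coefB coefX coefC /= subr0 mul0r. Qed.

Lemma S1_rec i k : S1 i.+1 k.+1 = S1 i k - i%:Z * S1 i k.+1.
Proof.
rewrite /S1 big_ord_recr /= mulrBr coefB coefMX /=.
by rewrite -mulrN coefMC mulrC mulrN.
Qed.

Lemma S1_big i k : (i < k)%N -> S1 i k = 0.
Proof.
elim: i k => [|i IH] [|k] //= hk.
  by rewrite S1_0k.
by rewrite S1_rec !IH ?mulr0 ?subr0 //; lia.
Qed.

Lemma sum_widen (K : nzRingType) (F : nat -> K) m t :
  (forall j, (m <= j)%N -> F j = 0) ->
  \sum_(j < m) F j = \sum_(j < m + t) F j.
Proof.
move=> h; rewrite [RHS]big_split_ord /= [X in _ + X]big1 ?addr0 //.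
by move=> j _; rewrite h //= leq_addr.
Qed.

Lemma sum_coef_horner (K : fieldType) (p : {poly K}) M x :
  (forall j, (M <= j)%N -> p`_j = 0) -> \sum_(j<M) p`_j * x^+j = p.[x].
Proof.
move=> h; rewrite horner_coef (@sum_widen _ (fun j => p`_j * x^+j) M (size p)); last by move=> j /h ->; rewrite mul0r.
rewrite [RHS](@sum_widen _ (fun j => p`_j * x^+j) (size p) M); last by move=> j hj; rewrite nth_default ?mul0r.
by rewrite addnC.
Qed.

Lemma natK_neq0 (K : fieldType) (hK : [pchar K] =i pred0) n :
  (n.+1%:R : K) != 0.
Proof. by rewrite ((pcharf0P K).1 hK). Qed.

Lemma fact_neq0 (K : fieldType) (hK : [pchar K] =i pred0) n :
  (n`!%:R : K) != 0.
Proof. by rewrite ((pcharf0P K).1 hK) -lt0n fact_gt0. Qed.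

Lemma coefXLpow (K : fieldType) (L1 : {poly K}) j i :
  (i < j)%N -> (('X * L1) ^+ j)`_i = 0.
Proof. by move=> h; rewrite exprMn coefXnM h. Qed.

Lemma compcoef (K : fieldType) (p L1 : {poly K}) M i : (i < M)%N ->
  (p \Po ('X * L1))`_i = \sum_(j < M) p`_j * ((('X * L1) ^+ j)`_i).
Proof.
move=> hi; rewrite coef_comp_poly.
rewrite (@sum_widen _ (fun j => p`_j * ((('X * L1) ^+ j)`_i)) (size p) M); last first.
  by move=> j hj; rewrite nth_default ?mul0r.
rewrite [RHS](@sum_widen _ (fun j => p`_j * ((('X * L1) ^+ j)`_i)) M (size p)); last first.
  by move=> j hj; rewrite coefXLpow ?mulr0 //; lia.
by rewrite addnC.
Qed.


Definition Lser (K : fieldType) k : K := log1m4_ser K k / 2.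
Definition Lpoly (K : fieldType) M : {poly K} := 'X * \poly_(j < M) Lser K j.+1.
Definition Fc (K : fieldType) i k : K :=
  k`!%:R / 2^+k * (-4)^+i / i`!%:R * (S1 i k)%:~R.

Lemma Lpoly_coef (K : fieldType) M i : (i <= M)%N -> (Lpoly K M)`_i = Lser K i.
Proof.
move=> h; rewrite /Lpoly coefXM; case: i h => [|i] h /=.
  by rewrite /Lser /log1m4_ser /= mul0r.
by rewrite coef_poly h.
Qed.

Lemma Lpoly_deriv (K : fieldType) (hK : [pchar K] =i pred0) M i : (i < M)%N ->
  (Lpoly K M)^`()`_i = -2 * 4^+i.
Proof.
move=> h; rewrite coef_deriv Lpoly_coef // /Lser /log1m4_ser /= -mulr_natr.
have h1 := natK_neq0 hK i. have h2 := natK_neq0 hK 1.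
rewrite exprS. field. by rewrite h2 [1 + _]addrC natr1 h1.
Qed.

Lemma G_coef (K : fieldType) (hK : [pchar K] =i pred0) M j : (j < M)%N ->
  ((1 - 4%:P * 'X) * (Lpoly K M)^`())`_j = if j == 0%N then -2 else 0.
Proof.
move=> h; rewrite mulrBl mul1r -mulrA coefB coefCM coefXM.
case: j h => [|j] h /=; first by rewrite mulr0 subr0 Lpoly_deriv // expr0 mulr1.
rewrite !Lpoly_deriv //; last by lia.
rewrite exprS; ring.
Qed.

Lemma Lrel (K : fieldType) (hK : [pchar K] =i pred0) M k i : (i < M)%N ->
  (Lpoly K M ^+ k.+1)`_i.+1 * i.+1%:R - 4 * i%:R * (Lpoly K M ^+ k.+1)`_i
  = -2 * k.+1%:R * (Lpoly K M ^+ k)`_i.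
Proof.
move=> hi; set P := Lpoly K M.
have e1 : ((1 - 4%:P * 'X) * (P ^+ k.+1)^`())`_i = -2 * k.+1%:R * (P ^+ k)`_i.
  rewrite deriv_exp /= [in LHS]mulrnAr [in LHS]mulrA coefMn coefM big_ord_recl /= (G_coef hK) /=; last by lia.
  rewrite big1 ?addr0 ?subn0; last first.
    move=> j _; rewrite (G_coef hK) /= ?mul0r //.
    have := ltn_ord j; rewrite /bump /=; lia.
  by rewrite -mulr_natr; ring.
rewrite -e1 mulrBl mul1r -[in RHS]mulrA coefB coefCM coefXM coef_deriv.
clear e1; case: i hi => [|i] hi /=; first by rewrite mulr0 mul0r subr0 mulr1n mulr1 subr0 mulr1n.
rewrite coef_deriv; ring.
Qed.

Lemma Fc_rel (K : fieldType) (hK : [pchar K] =i pred0) k i :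
  Fc K i.+1 k.+1 * i.+1%:R - 4 * i%:R * Fc K i k.+1 = -2 * k.+1%:R * Fc K i k.
Proof.
rewrite /Fc S1_rec !factS !natrM !exprS.
rewrite rmorphB rmorphM /= -[i%:~R]pmulrn.
have h1 := fact_neq0 hK i. have h2 := natK_neq0 hK i. have h3 := natK_neq0 hK 1.
have h4 : (2 ^+ k : K) != 0 by rewrite expf_neq0.
field. by rewrite h1 h4 h3 [1 + _]addrC natr1 h2.
Qed.

Lemma F2 (K : fieldType) (hK : [pchar K] =i pred0) M k i : (i <= M)%N ->
  (Lpoly K M ^+ k)`_i = Fc K i k.
Proof.
elim: k i => [|k IHk] i hi.
  rewrite expr0 coef1 /Fc /= mul1r expr0 invr1 mul1r.
  case: i hi => [|i] hi /=; first by rewrite S1_0k /= expr0 mul1r invr1 mul1r.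
  by rewrite S1_S0 mulr0.
elim: i hi => [|i IHi] hi.
  rewrite exprS coef0M (Lpoly_coef _ (leq0n _)) /Lser /log1m4_ser /= mul0r mul0r.
  by rewrite /Fc S1_0k /= mulr0.
have := Lrel hK k hi; rewrite IHi; last by lia.
rewrite IHk; last by lia.
rewrite -(Fc_rel hK) => /addIr /(mulIf (natK_neq0 hK i)).
done.
Qed.


Lemma S1_horner (K : fieldType) i M (x : K) : (i < M)%N ->
  \sum_(j<M) (S1 i j)%:~R * x^+j = \prod_(l < i) (x - l%:R).
Proof.
move=> hi.
pose P := map_poly (intr : int -> K) (\prod_(l < i) ('X - (l%:Z)%:P)).
have cP j : P`_j = (S1 i j)%:~R by rewrite coef_map.
rewrite (eq_bigr (fun j : 'I_M => P`_j * x^+j)); last by move=> j _; rewrite cP.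
rewrite sum_coef_horner; last by move=> j hj; rewrite cP S1_big //; lia.
rewrite /P rmorph_prod horner_prod; apply: eq_bigr => l _.
by rewrite rmorphB /= map_polyX map_polyC hornerXsubC /= -pmulrn.
Qed.

Lemma Eq_comp (K : fieldType) (hK : [pchar K] =i pred0) (q : K) N i : (i < N)%N ->
  ((\poly_(j < N) (q * exp_ser K j - (j==0%N)%:R)) \Po Lpoly K N)`_i
  = q * sqrt1m4_ser K i - (i == 0%N)%:R.
Proof.
move=> hi; rewrite /Lpoly (compcoef _ _ hi) -/(Lpoly K N).
rewrite (eq_bigr (fun j : 'I_N => q * ((-4)^+i / i`!%:R * ((S1 i j)%:~R * (2^-1)^+j))
   - ((j : nat) == 0%N)%:R * Fc K i j)); last first.
  move=> j _; rewrite coef_poly ltn_ord F2 ?(ltnW hi) // /Fc /exp_ser exprVn.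
  have h1 := fact_neq0 hK j. have h4 : (2 ^+ j : K) != 0 by rewrite expf_neq0 // (natK_neq0 hK 1).
  by field; rewrite (fact_neq0 hK i) h4 h1.
rewrite big_split /= sumrN -!mulr_sumr S1_horner //.
case: N hi => [|N] hi //.
rewrite big_ord_recl [X in _ * Fc K i ord0 + X]big1 ?addr0; last by move=> j _; rewrite /= mul0r.
rewrite /= mul1r /Fc fact0 expr0 invr1 !mul1r /sqrt1m4_ser /gbinom.
congr (_ - _); first by congr (_ * _); ring.
case: i {hi} => [|i]; first by rewrite S1_0k /= expr0 fact0 invr1 !mul1r.
by rewrite S1_S0 mulr0.
Qed.


Lemma smul_uniq (K : fieldType) (a x y : nat -> K) M : a 0%N != 0 ->
  (forall i, (i < M)%N -> smul a x i = smul a y i) ->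
  forall i, (i < M)%N -> x i = y i.
Proof.
move=> ha h.
suff H : forall m i, (i < m)%N -> (i < M)%N -> x i = y i by move=> i; apply: (H i.+1).
elim=> [|m IH] i // him hiM.
have e z : \sum_(j < i) a (bump 0 j) * z (i - bump 0 j)%N
    = \sum_(j < i) a j.+1 * z (i - j.+1)%N.
  by apply: eq_bigr => j _; rewrite /bump leq0n add1n.
have := h i hiM; rewrite /smul !big_ord_recl /= !subn0 !e.
rewrite [X in _ + X = _](eq_bigr (fun j : 'I_i => a j.+1 * y (i - j.+1)%N)); last first.
  move=> j _; rewrite IH //; have := ltn_ord j; lia.
by move=> /addIr /(mulfI ha).
Qed.

Theorem theorem2 (K : fieldType) (hK : [pchar K] =i pred0) (q lq : K)
  (hq : q != 1) (hlq : lq != 0) (B d : nat -> K)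
  (hB : is_qBernoulli q lq B) (hd : is_qCatalanDaehee q lq d) (n : nat) :
  (-1) ^+ n * d n
  = (n`!%:R)^-1 * \sum_(m < n.+1) 2 ^+ (2 * n - m) * B m * (S1 n m)%:~R.
Proof.
pose N := n.+1.
pose L := Lpoly K N.
pose Eq := \poly_(j < N) (q * exp_ser K j - (j==0%N)%:R).
pose Bq := \poly_(j < N) (B j / j`!%:R).
pose R : {poly K} := (q-1)%:P + ((q-1)/lq) *: 'X.
pose e j := (Bq \Po L)`_j.
have hR i : R`_i = (if i == 0%N then q - 1 else if i == 1%N then (q - 1) / lq else 0).
  rewrite /R coefD coefC coefZ coefX.
  by case: i => [|[|i]] /=; rewrite ?mulr0 ?mulr1 ?addr0 ?add0r.
have hEB i : (i < N)%N -> (Eq * Bq)`_i = R`_i.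
  move=> hi; rewrite coefM hR -(hB i) /smul; apply: eq_bigr => j _.
  rewrite !coef_poly; have hj := ltn_ord j.
  rewrite ifT; last by lia.
  by rewrite ifT //; lia.
have hcomp i : (i < N)%N -> ((Eq * Bq) \Po L)`_i = (R \Po L)`_i.
  move=> hi; rewrite /L /Lpoly !(compcoef _ _ hi); apply: eq_bigr => j _.
  by rewrite hEB.
have hRL i : (i <= N)%N -> (R \Po L)`_i
    = (if i == 0%N then q - 1 else 0) + (q - 1) / lq * 2^-1 * log1m4_ser K i.
  move=> hi; rewrite /R comp_polyD comp_polyC comp_polyZ comp_polyX coefD coefC coefZ.
  by rewrite /L Lpoly_coef // /Lser [log1m4_ser K i / 2]mulrC mulrA.
have he i : (i < N)%N ->
    smul (fun k => q * sqrt1m4_ser K k - (k == 0%N)%:R) e i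
    = (if i == 0%N then q - 1 else 0) + (q - 1) / lq * 2^-1 * log1m4_ser K i.
  move=> hi; rewrite -(hRL i (ltnW hi)) -(hcomp i hi) comp_polyM coefM /smul.
  apply: eq_bigr => j _; rewrite /L (Eq_comp hK); first by [].
  exact: (leq_trans (ltn_ord j) hi).
have hde i : (i < N)%N -> d i = e i.
  move: i; apply: (@smul_uniq K (fun k => q * sqrt1m4_ser K k - (k == 0%N)%:R) d e N).
    rewrite /sqrt1m4_ser /gbinom big_ord0 fact0 expr0 invr1 !mulr1 /= subr_eq0.
    exact: hq.
  move=> i0 hi0; rewrite hd he //.
rewrite (hde n (ltnSn n)) /e /L /Lpoly (compcoef _ _ (ltnSn n)) -/(Lpoly K N).
rewrite mulr_sumr mulr_sumr; apply: eq_bigr => m _.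
have hm : (m <= n)%N by have := ltn_ord m; lia.
rewrite coef_poly ltn_ord (F2 hK m (leqnSn n)) /Fc.
have h2 : (2 : K) != 0 by exact: (natK_neq0 hK 1).
have key : (-1) ^+ n * (-4 : K) ^+ n = 2 ^+ (2 * n).
  by rewrite -exprMn mulrC exprM; congr (_ ^+ _); rewrite expr2; ring.
transitivity ((-1) ^+ n * (-4 : K) ^+ n * (B m / m`!%:R * (m`!%:R / 2 ^+ m) / n`!%:R * (S1 n m)%:~R)).
  ring.
have hm2 : (m <= 2 * n)%N by lia.
rewrite key (exprB hm2); last by rewrite unitfE.
have h1 := fact_neq0 hK m. have h3 := fact_neq0 hK n.
have h4 : (2 ^+ m : K) != 0 by rewrite expf_neq0.
field. by rewrite h4 h3 h1.
Qed.
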